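(* For every $A\subseteq[n]$ one has (i) $[\Gamma_A,\underline{D}]=[\Gamma_A,\underline{x}]=0$, and (ii) $[\Gamma_A,\Gamma_{[n]}]=0$, as operators on $\mathcal{P}(\mathbb{R}^n)\otimes V$.
   Context: Fix $n\ge1$ and real parameters $\mu_1,\dots,\mu_n>0$; write $[n]=\{1,\dots,n\}$. For $i\in[n]$, $r_i$ is the reflection $(r_if)(x)=f(x_1,\dots,-x_i,\dots,x_n)$ and $T_i=\partial_{x_i}+\frac{\mu_i}{x_i}(1-r_i)$. $\mathcal{C}\ell_n$ is generated by $e_1,\dots,e_n$ with $e_ie_j+e_je_i=-2\delta_{ij}$, $V$ is a fixed left $\mathcal{C}\ell_n$-module, and operators act on $\mathcal{P}(\mathbb{R}^n)\otimes V$ with $x_i,T_i,r_i$ acting on the polynomial factor and $e_i$ on $V$. For $A\subseteq[n]$: $\underline{D}_A=\sum_{i\in A}e_iT_i$, $\underline{x}_A=\sum_{i\in A}e_ix_i$, $\underline{S}_A=\frac12([\underline{x}_A,\underline{D}_A]-1)$, $\Gamma_A=\underline{S}_A\prod_{i\in A}r_i$ (empty sums $0$, empty products $1$); $\underline{D}=\underline{D}_{[n]}$, $\underline{x}=\underline{x}_{[n]}$. *)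

(* Defs.v *)
From HB Require Import structures.
From mathcomp Require Import all_boot all_order all_algebra.
Set Implicit Arguments. Unset Strict Implicit. Unset Printing Implicit Defensive.
Import Order.TTheory GRing.Theory Num.Theory.
Local Open Scope ring_scope.

(* Multi-indices alpha : 'I_n -> nat, standing for monomials x^alpha.
   An element of P(R^n) (x) V is represented by its coefficient map
   alpha |-> (coefficient of x^alpha) in V, with finite support. *)
Definition mindex (n : nat) := 'I_n -> nat.
Definition PV (n : nat) (V : Type) := mindex n -> V.

Definition minc n (i : 'I_n) (a : mindex n) : mindex n :=
  fun j => if j == i then (a j).+1 else a j.
Definition mdec n (i : 'I_n) (a : mindex n) : mindex n :=
  fun j => if j == i then (a j).-1 else a j.

Definition finsupp n (V : zmodType) (F : PV n V) : Prop :=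
  exists N : nat, forall a : mindex n, (N < \sum_(j < n) a j)%N -> F a = 0.

Definition zeroPV n (V : zmodType) : PV n V := fun _ => 0.

Definition clifford_rel (R : realFieldType) (V : lmodType R) n
  (e : 'I_n -> {linear V -> V}) : Prop :=
  forall (i j : 'I_n) (v : V),
    e i (e j v) + e j (e i v) = if i == j then - (v *+ 2) else 0.

Section Ops.
Variables (R : realFieldType) (V : lmodType R) (n : nat).
Variable mu : 'I_n -> R.
Variable e : 'I_n -> {linear V -> V}.

Definition opX (i : 'I_n) (F : PV n V) : PV n V :=
  fun a => if (0 < a i)%N then F (mdec i a) else 0.
Definition opR (i : 'I_n) (F : PV n V) : PV n V :=
  fun a => (-1) ^+ (a i) *: F a.
(* Dunkl operator T_i : x^b |-> (b_i + mu_i (1 - (-1)^(b_i))) x^(b - e_i) *)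
Definition opT (i : 'I_n) (F : PV n V) : PV n V :=
  fun a => (((a i).+1)%:R + mu i * (1 - (-1) ^+ (a i).+1)) *: F (minc i a).
Definition opE (i : 'I_n) (F : PV n V) : PV n V := fun a => e i (F a).

Definition opD (A : {set 'I_n}) (F : PV n V) : PV n V :=
  fun a => \sum_(i in A) opE i (opT i F) a.
Definition opXA (A : {set 'I_n}) (F : PV n V) : PV n V :=
  fun a => \sum_(i in A) opE i (opX i F) a.

Definition comm (P Q : PV n V -> PV n V) (F : PV n V) : PV n V :=
  fun a => P (Q F) a - Q (P F) a.

Definition opS (A : {set 'I_n}) (F : PV n V) : PV n V :=
  fun a => 2^-1 *: (comm (opXA A) (opD A) F a - F a).

Definition opRA (A : {set 'I_n}) (F : PV n V) : PV n V :=
  foldr (fun i G => opR i G) F (enum A).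

Definition Gamma (A : {set 'I_n}) (F : PV n V) : PV n V := opS A (opRA A F).
End Ops.

(* Main.v *)
Require Import Defs.
From HB Require Import structures.
From mathcomp Require Import all_boot all_order all_algebra.
From mathcomp Require boolp.
From mathcomp Require Import ring.
From Stdlib Require Import FunctionalExtensionality ProofIrrelevance.
Import Order.TTheory GRing.Theory Num.Theory.
Local Open Scope ring_scope.

Module Aux.
Set Implicit Arguments. Unset Strict Implicit. Unset Printing Implicit Defensive.

Section Abs.
Variables (L : pzRingType) (n : nat) (E X T Q Rr : 'I_n -> L) (h : L).
Hypotheses (hEX : forall i j, E i * X j = X j * E i)
 (hET : forall i j, E i * T j = T j * E i)
 (hER : forall i j, E i * Rr j = Rr j * E i)
 (hXX : forall i j, X i * X j = X j * X i)
 (hTT : forall i j, T i * T j = T j * T i)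
 (hXT : forall i j, i != j -> X i * T j = T j * X i)
 (hRXn : forall i j, i != j -> Rr i * X j = X j * Rr i)
 (hRTn : forall i j, i != j -> Rr i * T j = T j * Rr i)
 (hRX : forall i, Rr i * X i = - (X i * Rr i))
 (hRT : forall i, Rr i * T i = - (T i * Rr i))
 (hRR : forall i j, Rr i * Rr j = Rr j * Rr i)
 (hQX : forall i, Q i * X i = - (X i * Q i))
 (hQT : forall i, Q i * T i = - (T i * Q i))
 (hTX : forall i, T i * X i = X i * T i + 1 + Q i *+ 2)
 (hEE : forall i j, E i * E j + E j * E i = if i == j then - (1 *+ 2) else 0)
 (hh : h *+ 2 = 1).

Definition anti (a b : L) := a * b = - (b * a).

Lemma antiC a b : anti a b -> anti b a.
Proof. by rewrite /anti => ->; rewrite opprK. Qed.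

Lemma anti_sumr (I : Type) (r : seq I) (P : pred I) (F : I -> L) a :
  (forall i, P i -> anti a (F i)) -> anti a (\sum_(i <- r | P i) F i).
Proof.
move=> H; rewrite /anti mulr_sumr mulr_suml -sumrN; apply: eq_bigr => i Pi; exact: H.
Qed.

Lemma anti_commM a b c : anti a b -> GRing.comm a c -> anti a (b * c).
Proof. by move=> Hb Hc; rewrite /anti mulrA Hb mulNr -mulrA Hc mulrA. Qed.

Lemma anti_comm2 a b c : anti a b -> anti a c -> GRing.comm a (b * c).
Proof.
by move=> Hb Hc; rewrite /GRing.comm mulrA Hb mulNr -mulrA Hc mulrN opprK mulrA.
Qed.

Lemma anti_commM' a b c : GRing.comm a c -> anti a b -> anti a (c * b).
Proof. by move=> Hc Hb; rewrite /anti mulrA Hc -mulrA Hb mulrN mulrA. Qed.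

Definition xs (A : {set 'I_n}) := \sum_(i in A) E i * X i.
Definition Ds (A : {set 'I_n}) := \sum_(i in A) E i * T i.
Definition RA (A : {set 'I_n}) := \prod_(i in A) Rr i.
Definition Sp A := xs A * Ds A - Ds A * xs A - 1.
Definition Gm A := Sp A * RA A.

Lemma comm_Sp c A : anti c (xs A) -> anti c (Ds A) -> GRing.comm c (Sp A).
Proof.
move=> Hx HD; apply: commrB; last exact: commr1.
by apply: commrB; apply: anti_comm2.
Qed.

Lemma EE_anti k i : k != i -> E k * E i = - (E i * E k).
Proof. by move=> ki; apply/eqP; rewrite -addr_eq0 hEE (negbTE ki). Qed.

Lemma anti_EE (Z Y : 'I_n -> L) k i : k != i ->
  (forall a b, E a * Z b = Z b * E a) -> (forall a b, E a * Y b = Y b * E a) ->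
  Z k * Y i = Y i * Z k -> anti (E k * Z k) (E i * Y i).
Proof.
move=> ki hZ hY hZY; rewrite /anti.
rewrite -mulrA (mulrA (Z k)) -hZ -(mulrA (E i)) hZY mulrA (EE_anti ki) mulNr.
congr (- _); rewrite -!mulrA; congr (_ * _).
by rewrite (mulrA (E k)) hY -mulrA.
Qed.

Lemma cancel2 (z w : L) : z *+ 2 = w *+ 2 -> z = w.
Proof.
by move=> H; rewrite -(mul1r z) -(mul1r w) -hh !mulrnAl -!mulrnAr H.
Qed.

Lemma square (Y : 'I_n -> L) : (forall a b, E a * Y b = Y b * E a) ->
  (forall a b, Y a * Y b = Y b * Y a) -> forall A : {set 'I_n},
  (\sum_(i in A) E i * Y i) * (\sum_(i in A) E i * Y i) = - \sum_(i in A) Y i * Y i.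
Proof.
move=> hY hYY A; apply: cancel2.
have -> : (\sum_(i in A) E i * Y i) * (\sum_(i in A) E i * Y i) =
   \sum_(i in A) \sum_(j in A) (E i * E j * (Y i * Y j)).
  rewrite mulr_suml; apply: eq_bigr => i _; rewrite mulr_sumr; apply: eq_bigr => j _.
  by rewrite -mulrA (mulrA (Y i)) -hY !mulrA.
rewrite mulr2n {1}exchange_big -big_split /=.
rewrite -sumrN -sumrMnl; apply: eq_bigr => i iA.
rewrite -big_split /= (bigD1 i) //= big1 ?addr0.
  by rewrite -mulrDl hEE eqxx mulNr mulr_natl mulNrn.
move=> j /andP [_ ji]; rewrite (hYY j i) -mulrDl.
by rewrite addrC hEE eq_sym (negbTE ji) mul0r.
Qed.

Lemma commut (Y W : 'I_n -> L) : (forall a b, E a * W b = W b * E a) ->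
  (forall a b, a != b -> Y a * W b = W b * Y a) -> forall A : {set 'I_n},
  (\sum_(i in A) E i * Y i) * (\sum_(i in A) W i) -
  (\sum_(i in A) W i) * (\sum_(i in A) E i * Y i) =
  \sum_(i in A) E i * (Y i * W i - W i * Y i).
Proof.
move=> hW hYW A; rewrite mulr_suml mulr_sumr -sumrB; apply: eq_bigr => i iA.
rewrite mulr_sumr mulr_suml -sumrB (bigD1 i) //= big1 ?addr0.
  by rewrite mulrBr !mulrA hW.
by move=> j /andP [_ ji]; rewrite -mulrA (hYW i j) 1?eq_sym // mulrA hW -mulrA subrr.
Qed.


Lemma XTT i : X i * (T i * T i) - T i * T i * X i = - (T i *+ 2).
Proof.
rewrite -(mulrA (T i)) hTX !mulrDr mulr1 (mulrA (T i) (X i) (T i)) hTX !mulrDl mul1r.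
by rewrite hQT -(mulrA (X i)) -opprD addrAC subrK -addrA opprD addNKr mulr2n.
Qed.

Lemma XXT i : X i * X i * T i - T i * (X i * X i) = - (X i *+ 2).
Proof.
rewrite (mulrA (T i)) hTX !mulrDl mul1r -(mulrA (X i) (T i) (X i)) hTX !mulrDr mulr1.
by rewrite hQX -opprD addrAC addrK mulrA -addrA opprD addNKr mulr2n.
Qed.

Lemma zm1 (a b c d : L) : (a - b - d) + (b - c - d) = a - c - d *+ 2.
Proof.
by rewrite addrACA -(addrA a) (addrA (-b)) addNr add0r -opprD -mulr2n.
Qed.

Lemma zm2 (a b c d : L) : (a - b - d) + (c - a - d) = c - b - d *+ 2.
Proof.
by rewrite addrACA (addrC (a - b)) -(addrA c) (addrA (-a)) addNr add0r -opprD -mulr2n.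
Qed.

Lemma antiSD A : anti (Sp A) (Ds A).
Proof.
rewrite /anti; apply/eqP; rewrite -addr_eq0; apply/eqP.
rewrite /Sp !mulrBl !mulrBr mul1r mulr1 !mulrA zm1.
rewrite -(mulrA (xs A)) (square hET hTT) mulrN mulNr opprK.
have hEW : forall a b, E a * (T b * T b) = T b * T b * E a.
  by move=> a b; rewrite mulrA hET -mulrA hET mulrA.
have hXW : forall a b, a != b -> X a * (T b * T b) = T b * T b * X a.
  by move=> a b ab; rewrite mulrA hXT // -mulrA hXT // mulrA.
apply/eqP; rewrite subr_eq0; apply/eqP.
rewrite addrC -opprB /xs (commut hEW hXW).
rewrite (eq_bigr (fun i => - (E i * T i *+ 2))); last by move=> i _; rewrite XTT mulrN mulrnAr.
by rewrite sumrN sumrMnl opprK.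
Qed.

Lemma antiSx A : anti (Sp A) (xs A).
Proof.
rewrite /anti; apply/eqP; rewrite -addr_eq0; apply/eqP.
rewrite /Sp !mulrBl !mulrBr mul1r mulr1 !mulrA zm2.
rewrite -(mulrA (Ds A)) (square hEX hXX) mulrN mulNr opprK.
have hEW : forall a b, E a * (X b * X b) = X b * X b * E a.
  by move=> a b; rewrite mulrA hEX -mulrA hEX mulrA.
have hTW : forall a b, a != b -> T a * (X b * X b) = X b * X b * T a.
  by move=> a b ab; rewrite mulrA -hXT 1?eq_sym // -mulrA -hXT 1?eq_sym // mulrA.
apply/eqP; rewrite subr_eq0; apply/eqP.
rewrite addrC /Ds (commut hEW hTW).
rewrite (eq_bigr (fun i => E i * X i *+ 2)); last first.
  by move=> i _; rewrite -opprB XXT opprK mulrnAr.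
by rewrite sumrMnl.
Qed.


Lemma anti_RB (Y : 'I_n -> L) :
  (forall i j, i != j -> Rr i * Y j = Y j * Rr i) ->
  (forall i, Rr i * Y i = - (Y i * Rr i)) ->
  forall i (B : {set 'I_n}), i \in B -> anti (E i * Y i) (RA B).
Proof.
move=> hRYn hRY i B iB; rewrite /RA.
have hc : forall j, j != i -> GRing.comm (E i * Y i) (Rr j).
  by move=> j ji; rewrite /GRing.comm -mulrA -(hRYn _ _ ji) mulrA hER -mulrA.
have ha : anti (E i * Y i) (Rr i).
  have hYR : Y i * Rr i = - (Rr i * Y i) by rewrite hRY opprK.
  by rewrite /anti -mulrA hYR mulrN mulrA hER -mulrA.
have hU := index_enum_uniq 'I_n.
case/splitPr: (mem_index_enum i) hU => s1 s2 hU.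
rewrite big_cat big_cons /= iB.
move: hU; rewrite cat_uniq /= => /and3P [_ /norP [i1 _] /andP [i2 _]].
have c1 : GRing.comm (E i * Y i) (\prod_(j <- s1 | j \in B) Rr j).
  rewrite big_seq_cond; apply: commr_prod => j /andP [js1 _]; apply: hc.
  by apply: contraNneq i1 => <-.
have c2 : GRing.comm (E i * Y i) (\prod_(j <- s2 | j \in B) Rr j).
  rewrite big_seq_cond; apply: commr_prod => j /andP [js2 _]; apply: hc.
  by apply: contraNneq i2 => <-.
apply: anti_commM'; first exact: c1.
exact: anti_commM.
Qed.

Lemma anti_xR (A B : {set 'I_n}) : A \subset B -> anti (xs A) (RA B).
Proof.
move=> AB; apply: antiC; apply: anti_sumr => i iA; apply: antiC.
by apply: (anti_RB hRXn hRX); apply: (subsetP AB).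
Qed.

Lemma anti_DR (A B : {set 'I_n}) : A \subset B -> anti (Ds A) (RA B).
Proof.
move=> AB; apply: antiC; apply: anti_sumr => i iA; apply: antiC.
by apply: (anti_RB hRTn hRT); apply: (subsetP AB).
Qed.

Lemma comm_RSp (A B : {set 'I_n}) : A \subset B -> GRing.comm (RA B) (Sp A).
Proof.
by move=> AB; apply: comm_Sp; apply: antiC; [apply: anti_xR | apply: anti_DR].
Qed.

Lemma comm_GEZ (Z : 'I_n -> L) k (A : {set 'I_n}) : k \notin A ->
  (forall a b, E a * Z b = Z b * E a) ->
  (forall j, j != k -> Rr j * Z k = Z k * Rr j) ->
  (forall i, i \in A -> Z k * X i = X i * Z k) ->
  (forall i, i \in A -> Z k * T i = T i * Z k) ->
  GRing.comm (E k * Z k) (Gm A).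
Proof.
move=> kA hZ hRZ hZX hZT; apply: commrM.
  have kiA : forall i, i \in A -> k != i.
    by move=> i iA; apply: contraNneq kA => ->.
  apply: comm_Sp; apply: anti_sumr => i iA; apply: anti_EE => //; auto.
apply: commr_prod => j jA.
have jk : j != k by apply: contraNneq kA => <-.
by rewrite /GRing.comm -mulrA -(hRZ j jk) mulrA hER -mulrA.
Qed.

Lemma splitT (F : 'I_n -> L) (A : {set 'I_n}) :
  \sum_(i in [set: 'I_n]) F i = \sum_(i in A) F i + \sum_(i in ~: A) F i.
Proof. by rewrite (big_setID A) setTI setTD. Qed.

Lemma comm_GD A : GRing.comm (Gm A) (Ds [set: 'I_n]).
Proof.
rewrite /Ds (splitT _ A); apply: commrD.
  rewrite /GRing.comm /Gm -mulrA (antiC (anti_DR (subxx A))) mulrN mulrA.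
  by rewrite antiSD mulNr opprK mulrA.
apply: commr_sum => k; rewrite inE => kA; apply: commr_sym.
apply: comm_GEZ => //.
- by move=> j jk; apply: hRTn.
- by move=> i iA; apply: esym; apply: hXT; apply: contraNneq kA => <-.
Qed.

Lemma comm_Gx A : GRing.comm (Gm A) (xs [set: 'I_n]).
Proof.
rewrite /xs (splitT _ A); apply: commrD.
  rewrite /GRing.comm /Gm -mulrA (antiC (anti_xR (subxx A))) mulrN mulrA.
  by rewrite antiSx mulNr opprK mulrA.
apply: commr_sum => k; rewrite inE => kA; apply: commr_sym.
apply: comm_GEZ => //.
- by move=> j jk; apply: hRXn.
- by move=> i iA; apply: hXT; apply: contraNneq kA => ->.
Qed.

Lemma comm_GG A : GRing.comm (Gm A) (Gm [set: 'I_n]).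
Proof.
apply: commrM.
  have hx := comm_Gx A; have hD := comm_GD A.
  by apply: commrB; [apply: commrB; apply: commrM | apply: commr1].
apply: commr_sym; apply: commrM; first by apply: comm_RSp; apply: subsetT.
apply: commr_prod => j _; apply: commr_sym; apply: commr_prod => i _; apply: hRR.
Qed.

End Abs.


Section Lop.
Variables (R : realFieldType) (V : lmodType R) (n : nat).
Definition lin (f : PV n V -> PV n V) := forall (c : R) (F G : PV n V),
  f (fun a => c *: F a + G a) = (fun a => c *: f F a + f G a).
Record lop := Lop { fop :> PV n V -> PV n V; fopP : lin fop }.
End Lop.

HB.instance Definition _ R V n := boolp.gen_eqMixin (@lop R V n).
HB.instance Definition _ R V n := boolp.gen_choiceMixin (@lop R V n).

Section LopZ.
Variables (R : realFieldType) (V : lmodType R) (n : nat).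
Local Notation lop := (@lop R V n).
Local Notation lin := (@lin R V n).

Lemma lop_ext (P Q : lop) : fop P = fop Q -> P = Q.
Proof.
case: P => f fP; case: Q => g gP /= efg; subst g; congr Lop; apply: proof_irrelevance.
Qed.

Lemma lin_add f : lin f -> forall F G, f (fun a => F a + G a) = (fun a => f F a + f G a).
Proof.
move=> Hf F G; have := Hf 1 F G.
have -> : (fun a => 1 *: F a + G a) = (fun a => F a + G a).
  by apply: functional_extensionality => a; rewrite scale1r.
move=> ->; apply: functional_extensionality => a; by rewrite scale1r.
Qed.

Lemma lin0 f : lin f -> f (fun _ => 0) = (fun _ => 0).
Proof.
move=> Hf; have := lin_add Hf (fun _ => 0) (fun _ => 0).
have -> : (fun _ : mindex n => (0 : V) + 0) = (fun _ => 0).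
  by apply: functional_extensionality => a; rewrite addr0.
move=> H; apply: functional_extensionality => a.
have /= := congr1 (fun g => g a) H.
set v := f _ a; rewrite -{1}(addr0 v) => /addrI.
by [].
Qed.

Lemma linZ f : lin f -> forall c F, f (fun a => c *: F a) = (fun a => c *: f F a).
Proof.
move=> Hf c F; have := Hf c F (fun _ => 0).
have -> : (fun a => c *: F a + 0) = (fun a => c *: F a).
  by apply: functional_extensionality => a; rewrite addr0.
move=> ->; rewrite (lin0 Hf); apply: functional_extensionality => a; by rewrite addr0.
Qed.

Lemma linN f : lin f -> forall F, f (fun a => - F a) = (fun a => - f F a).
Proof.
move=> Hf F; have := linZ Hf (-1) F.
have -> : (fun a => (-1 : R) *: F a) = (fun a => - F a).
  by apply: functional_extensionality => a; rewrite scaleN1r.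
move=> ->; apply: functional_extensionality => a; by rewrite scaleN1r.
Qed.

Definition ladd_f (P Q : lop) : PV n V -> PV n V := fun F a => P F a + Q F a.
Lemma ladd_lin P Q : lin (ladd_f P Q).
Proof.
move=> c F G; rewrite /ladd_f (fopP P) (fopP Q).
by apply: functional_extensionality => a; rewrite scalerDr addrACA.
Qed.
Definition ladd P Q := Lop (ladd_lin P Q).

Definition lopp_f (P : lop) : PV n V -> PV n V := fun F a => - P F a.
Lemma lopp_lin P : lin (lopp_f P).
Proof.
move=> c F G; rewrite /lopp_f (fopP P).
by apply: functional_extensionality => a; rewrite opprD scalerN.
Qed.
Definition lopp P := Lop (lopp_lin P).

Lemma lzero_lin : lin (fun (F : PV n V) (a : mindex n) => 0).
Proof. by move=> c F G; apply: functional_extensionality => a; rewrite scaler0 addr0. Qed.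
Definition lzero := Lop lzero_lin.

Lemma lone_lin : lin (fun F => F).
Proof. by []. Qed.
Definition lone := Lop lone_lin.

Lemma lmul_lin (P Q : lop) : lin (fun F => P (Q F)).
Proof. by move=> c F G; rewrite (fopP Q) (fopP P). Qed.
Definition lmul P Q := Lop (lmul_lin P Q).

Lemma laddA : associative ladd.
Proof.
move=> P Q S; apply: lop_ext; apply: functional_extensionality => F.
by apply: functional_extensionality => a; rewrite /= /ladd_f /= addrA.
Qed.
Lemma laddC : commutative ladd.
Proof.
move=> P Q; apply: lop_ext; apply: functional_extensionality => F.
by apply: functional_extensionality => a; rewrite /= /ladd_f /= addrC.
Qed.
Lemma ladd0 : left_id lzero ladd.
Proof.
move=> P; apply: lop_ext; apply: functional_extensionality => F.
by apply: functional_extensionality => a; rewrite /= /ladd_f /= add0r.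
Qed.
Lemma laddN : left_inverse lzero lopp ladd.
Proof.
move=> P; apply: lop_ext; apply: functional_extensionality => F.
by apply: functional_extensionality => a; rewrite /= /ladd_f /lopp_f /= addNr.
Qed.

HB.instance Definition _ := GRing.isZmodule.Build lop laddA laddC ladd0 laddN.

Lemma lmulA : associative lmul.
Proof. by move=> P Q S; apply: lop_ext. Qed.
Lemma lmul1 : left_id lone lmul.
Proof. by move=> P; apply: lop_ext. Qed.
Lemma lmulr1 : right_id lone lmul.
Proof. by move=> P; apply: lop_ext. Qed.
Lemma lmulDl : left_distributive lmul (@GRing.add _).
Proof. by move=> P Q S; apply: lop_ext. Qed.
Lemma lmulDr : right_distributive lmul (@GRing.add _).
Proof.
move=> P Q S; apply: lop_ext; apply: functional_extensionality => F /=.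
exact: (lin_add (fopP P)).
Qed.

HB.instance Definition _ := GRing.Zmodule_isPzRing.Build lop lmulA lmul1 lmulr1 lmulDl lmulDr.

End LopZ.


Section Conc.
Variables (R : realFieldType) (V : lmodType R) (n : nat).
Variables (mu : 'I_n -> R) (e : 'I_n -> {linear V -> V}).
Local Notation lop := (@lop R V n).

Lemma opX_lin i : lin (@opX R V n i).
Proof.
move=> c F G; apply: functional_extensionality => a; rewrite /opX.
by case: ifP => _ //; rewrite scaler0 addr0.
Qed.
Lemma opR_lin i : lin (@opR R V n i).
Proof.
move=> c F G; apply: functional_extensionality => a; rewrite /opR.
by rewrite scalerDr !scalerA mulrC.
Qed.
Lemma opT_lin i : lin (@opT R V n mu i).
Proof.
move=> c F G; apply: functional_extensionality => a; rewrite /opT.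
by rewrite scalerDr !scalerA mulrC.
Qed.
Lemma opE_lin i : lin (@opE R V n e i).
Proof.
by move=> c F G; apply: functional_extensionality => a; rewrite /opE linearP.
Qed.

Definition Xo i : lop := Lop (opX_lin i).
Definition Ro i : lop := Lop (opR_lin i).
Definition To i : lop := Lop (opT_lin i).
Definition Eo i : lop := Lop (opE_lin i).

Lemma sc_lin (c : R) : lin (fun (F : PV n V) a => c *: F a).
Proof.
move=> d F G; apply: functional_extensionality => a.
by rewrite scalerDr !scalerA mulrC.
Qed.
Definition sc c : lop := Lop (sc_lin c).

Lemma sc_comm c (P : lop) : sc c * P = P * sc c.
Proof.
apply: lop_ext; apply: functional_extensionality => F /=.
by rewrite (linZ (fopP P)).
Qed.

Definition Qo i := sc (mu i) * Ro i.

Lemma minc_ne i j (a : mindex n) : i != j -> minc i a j = a j.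
Proof. by rewrite /minc eq_sym => /negbTE ->. Qed.
Lemma mdec_ne i j (a : mindex n) : i != j -> mdec i a j = a j.
Proof. by rewrite /mdec eq_sym => /negbTE ->. Qed.
Lemma minc_eq i (a : mindex n) : minc i a i = (a i).+1.
Proof. by rewrite /minc eqxx. Qed.
Lemma mdec_eq i (a : mindex n) : mdec i a i = (a i).-1.
Proof. by rewrite /mdec eqxx. Qed.
Lemma minc_minc i j (a : mindex n) : minc i (minc j a) = minc j (minc i a).
Proof.
apply: functional_extensionality => k; rewrite /minc.
by case: (k == i); case: (k == j).
Qed.
Lemma mdec_mdec i j (a : mindex n) : mdec i (mdec j a) = mdec j (mdec i a).
Proof.
apply: functional_extensionality => k; rewrite /mdec.
by case: (k == i); case: (k == j).
Qed.
Lemma minc_mdec i j (a : mindex n) : i != j -> minc i (mdec j a) = mdec j (minc i a).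
Proof.
move=> ij; apply: functional_extensionality => k; rewrite /minc /mdec.
case: (eqVneq k i) => [->|ki]; first by rewrite (negbTE ij).
by case: (k == j).
Qed.
Lemma mdec_minc i (a : mindex n) : mdec i (minc i a) = a.
Proof.
apply: functional_extensionality => k; rewrite /minc /mdec.
by case: (k =P i) => [->|_].
Qed.
Lemma minc_mdec_eq i (a : mindex n) : (0 < a i)%N -> minc i (mdec i a) = a.
Proof.
move=> ai; apply: functional_extensionality => k; rewrite /minc /mdec.
by case: (k =P i) => [->|_] //; rewrite prednK.
Qed.

Ltac ptw := apply: lop_ext; apply: functional_extensionality => F;
  apply: functional_extensionality => a; rewrite /=.

Lemma hEX i j : Eo i * Xo j = Xo j * Eo i.
Proof. ptw; rewrite /opE /opX; case: ifP => _ //; exact: linear0. Qed.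
Lemma hET i j : Eo i * To j = To j * Eo i.
Proof. by ptw; rewrite /opE /opT linearZ. Qed.
Lemma hER i j : Eo i * Ro j = Ro j * Eo i.
Proof. by ptw; rewrite /opE /opR linearZ. Qed.
Lemma hXX i j : Xo i * Xo j = Xo j * Xo i.
Proof.
ptw; rewrite /opX; case: (i =P j) => [->//|/eqP ij].
rewrite mdec_ne // mdec_ne 1?eq_sym // mdec_mdec.
by case: ifP; case: ifP.
Qed.
Lemma hTT i j : To i * To j = To j * To i.
Proof.
ptw; rewrite /opT; case: (i =P j) => [->//|/eqP ij].
rewrite minc_ne // minc_ne 1?eq_sym // minc_minc !scalerA mulrC.
by [].
Qed.
Lemma hXT i j : i != j -> Xo i * To j = To j * Xo i.
Proof.
move=> ij; ptw; rewrite /opX /opT mdec_ne // minc_ne 1?eq_sym //.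
by case: ifP => _; rewrite ?scaler0 // minc_mdec 1?eq_sym.
Qed.
Lemma hRXn i j : i != j -> Ro i * Xo j = Xo j * Ro i.
Proof.
move=> ij; ptw; rewrite /opX /opR.
by case: ifP => _; rewrite ?scaler0 // mdec_ne // eq_sym.
Qed.
Lemma hRTn i j : i != j -> Ro i * To j = To j * Ro i.
Proof.
move=> ij; have ji : j != i by rewrite eq_sym.
ptw; rewrite /opT /opR minc_ne //.
by rewrite !scalerA mulrC.
Qed.
Lemma hRX i : Ro i * Xo i = - (Xo i * Ro i).
Proof.
ptw; rewrite /lopp_f /= /opX /opR.
case: ifP => ai; last by rewrite scaler0 oppr0.
by rewrite mdec_eq -scaleNr; congr (_ *: _); rewrite -{1}(prednK ai) exprS mulN1r.
Qed.
Lemma hRT i : Ro i * To i = - (To i * Ro i).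
Proof.
ptw; rewrite /lopp_f /= /opT /opR minc_eq.
by rewrite !scalerA exprS mulN1r mulrN scaleNr !opprK; congr (_ *: _); rewrite mulrC.
Qed.
Lemma hRR i j : Ro i * Ro j = Ro j * Ro i.
Proof. by ptw; rewrite /opR !scalerA mulrC. Qed.
Lemma hQX i : Qo i * Xo i = - (Xo i * Qo i).
Proof. by rewrite /Qo -mulrA hRX mulrN; congr (- _); rewrite [RHS]mulrA -sc_comm mulrA. Qed.
Lemma hQT i : Qo i * To i = - (To i * Qo i).
Proof. by rewrite /Qo -mulrA hRT mulrN; congr (- _); rewrite [RHS]mulrA -sc_comm mulrA. Qed.

Lemma hTX i : To i * Xo i = Xo i * To i + 1 + Qo i *+ 2.
Proof.
rewrite mulr2n; ptw; rewrite /ladd_f /= /ladd_f /=.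
rewrite /opT /opX /opR minc_eq /= mdec_minc.
case Ea: (a i) => [|k] /=.
  rewrite add0r -[F a in RHS]scale1r !scalerA -!scalerDl; congr (_ *: _).
  rewrite expr1 expr0; ring.
rewrite mdec_eq minc_mdec_eq; last by rewrite Ea.
rewrite Ea /=.
rewrite -[F a in RHS]scale1r !scalerA -!scalerDl; congr (_ *: _).
rewrite !exprS mulr1; ring.
Qed.

Lemma hh : sc (2^-1) *+ 2 = 1.
Proof.
rewrite mulr2n; ptw; rewrite /ladd_f /=.
have h2 : (2^-1 + 2^-1 : R) = 1 by field.
by rewrite -scalerDl h2 scale1r.
Qed.

Hypothesis hcl : clifford_rel e.

Lemma hEE i j : Eo i * Eo j + Eo j * Eo i = if i == j then - (1 *+ 2) else 0.
Proof.
case: (eqVneq i j) => [<-|ij].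
  rewrite mulr2n; ptw; rewrite /ladd_f /= /lopp_f /= /ladd_f /=.
  by have := hcl i i (F a); rewrite eqxx mulr2n.
by ptw; rewrite /ladd_f /=; have := hcl i j (F a); rewrite (negbTE ij).
Qed.

Lemma fop_sum (A : {set 'I_n}) (P : 'I_n -> lop) F a :
  fop (\sum_(i in A) P i) F a = \sum_(i in A) fop (P i) F a.
Proof.
apply: (big_rec2 (fun (p : lop) (v : V) => fop p F a = v)) => //.
by move=> i p v _ IH; rewrite /= /ladd_f /= IH.
Qed.

Lemma opXA_eq A : opXA e A = fop (xs Eo Xo A).
Proof.
apply: functional_extensionality => F; apply: functional_extensionality => a.
by rewrite /opXA /xs fop_sum.
Qed.

Lemma opD_eq A : opD mu e A = fop (Ds Eo To A).
Proof.
apply: functional_extensionality => F; apply: functional_extensionality => a.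
by rewrite /opD /Ds fop_sum.
Qed.

Lemma opRA_eq A : @opRA R V n A = fop (RA Ro A).
Proof.
have -> : RA Ro A = \prod_(i <- enum A) Ro i.
  by rewrite /RA -big_filter deprecated_filter_index_enum.
apply: functional_extensionality => F; rewrite /opRA.
elim: (enum A) => [|i s IH] /=; first by rewrite big_nil.
by rewrite big_cons /= IH.
Qed.

Lemma Gamma_eq A : Gamma mu e A = fop (sc (2^-1) * Gm Eo Xo To Ro A).
Proof.
apply: functional_extensionality => F; apply: functional_extensionality => a.
rewrite /Gamma /opS /comm opRA_eq opXA_eq opD_eq.
by [].
Qed.

Lemma key (P Q : lop) F : P * Q = Q * P -> comm (fop P) (fop Q) F = @zeroPV n V.
Proof.
move=> H; apply: functional_extensionality => a; rewrite /comm /zeroPV.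
have -> : fop P (fop Q F) a = fop (P * Q) F a by [].
by rewrite H subrr.
Qed.

Lemma sc_commG c (G P : lop) : G * P = P * G -> (sc c * G) * P = P * (sc c * G).
Proof. by move=> H; rewrite -mulrA H mulrA sc_comm -mulrA. Qed.

Lemma main A F :
    [/\ comm (Gamma mu e A) (opD mu e setT) F = @zeroPV n V,
        comm (Gamma mu e A) (opXA e setT) F = @zeroPV n V &
        comm (Gamma mu e A) (Gamma mu e setT) F = @zeroPV n V].
Proof.
rewrite !Gamma_eq opD_eq opXA_eq; split; apply: key.
- apply: sc_commG.
  exact: (comm_GD hEX hET hER hTT hXT hRTn hRT hQT hTX hEE hh A).
- apply: sc_commG.
  exact: (comm_Gx hEX hET hER hXX hXT hRXn hRX hQX hTX hEE hh A).
- apply: sc_commG; apply: esym; apply: sc_commG.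
  exact: (esym (comm_GG hEX hET hER hXX hTT hXT hRXn hRTn hRX hRT hRR hQX hQT hTX hEE hh A)).
Qed.
End Conc.

End Aux.
Import Aux.

Theorem lemma1 (R : realFieldType) (V : lmodType R) (n : nat)
  (mu : 'I_n -> R) (e : 'I_n -> {linear V -> V}) :
  (0 < n)%N -> (forall i, 0 < mu i) -> clifford_rel e ->
  forall (A : {set 'I_n}) (F : PV n V), finsupp F ->
    [/\ comm (Gamma mu e A) (opD mu e setT) F = @zeroPV n V,
        comm (Gamma mu e A) (opXA e setT) F = @zeroPV n V &
        comm (Gamma mu e A) (Gamma mu e setT) F = @zeroPV n V].
Proof. by move=> _ _ hcl A F _; apply: main. Qed.
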